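(* Let $S^{\max}$, $L$ and $\alpha$ be as in the context. For every $P\in L$ and every $\tau\in S^{\mathrm{pf}}\setminus S^{\max}$: if $\tau e\in\alpha(P)$ for every event $e\in E$ such that $\tau e\in S^{\mathrm{pf}}$, then $\tau\in\alpha(P)$.
   Context: Let $E$ be a set of events. A trace is a finite sequence $\sigma=\sigma_0\cdots\sigma_{n-1}$ ($n\ge 0$) or an infinite sequence $\sigma_0\sigma_1\cdots$ of events; $|\sigma|$ is its length ($\infty$ if infinite) and $\mathbb{T}$ is the set of all traces (including the empty trace). Write $\sigma\preceq\sigma'$ iff $|\sigma|\le|\sigma'|$ and $\sigma_i=\sigma'_i$ for all $0\le i<|\sigma|$ (prefix order). For a finite trace $\tau$ and an event $e$, $\tau e$ is the trace obtained by appending $e$. For $P\subseteq\mathbb{T}$, $\mathrm{pf}(P)=\{\sigma'\in\mathbb{T}\mid\exists\sigma\in P.\ \sigma'\preceq\sigma\}$. Fix $S^{\max}\subseteq\mathbb{T}$ (the maximal trace semantics) and let $S^{\mathrm{pf}}=\mathrm{pf}(S^{\max})$ (valid traces). For $P\subseteq\mathbb{T}$, $\alpha(P)=\{\sigma\in\mathrm{pf}(P)\mid\forall\sigma'\in S^{\max}.\ \sigma\preceq\sigma'\Rightarrow\sigma'\in P\}$. Let $L\subseteq\wp(S^{\max})$ with $S^{\max},\emptyset\in L$ be such that $(L,\subseteq)$ is a complete lattice. *)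

(* Defs.v *)
From Stdlib Require Import List Arith Lia.
Import ListNotations.
Set Implicit Arguments.

Inductive trace (E : Type) : Type :=
| Fin : list E -> trace E
| Inf : (nat -> E) -> trace E.

Arguments Fin {E} _.
Arguments Inf {E} _.

(* |σ| with ∞ encoded as None *)
Definition tlen {E} (s : trace E) : option nat :=
  match s with Fin l => Some (length l) | Inf _ => None end.

Definition tnth {E} (s : trace E) (i : nat) : option E :=
  match s with Fin l => nth_error l i | Inf f => Some (f i) end.

Definition len_le {E} (s s' : trace E) : Prop :=
  match tlen s, tlen s' with
  | _, None => True
  | None, Some _ => False
  | Some n, Some m => n <= m
  end.

Definition idx_lt {E} (s : trace E) (i : nat) : Prop :=
  match tlen s with None => True | Some n => i < n end.

Definition prefix {E} (s s' : trace E) : Prop :=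
  len_le s s' /\ forall i, idx_lt s i -> tnth s i = tnth s' i.

Definition snoc {E} (t : list E) (e : E) : trace E := Fin (t ++ [e]).

Definition pf {E} (P : trace E -> Prop) : trace E -> Prop :=
  fun s' => exists s, P s /\ prefix s' s.

Definition alpha {E} (Smax P : trace E -> Prop) : trace E -> Prop :=
  fun s => pf P s /\ forall s', Smax s' -> prefix s s' -> P s'.

Definition subset {E} (A B : trace E -> Prop) : Prop := forall s, A s -> B s.

(* (L, ⊆) is a complete lattice: every subfamily of L has a least upper
   bound in L w.r.t. ⊆ (this implies existence of all greatest lower bounds). *)
Definition complete_lattice {E} (L : (trace E -> Prop) -> Prop) : Prop :=
  forall F : (trace E -> Prop) -> Prop,
    (forall X, F X -> L X) ->
    exists U, L U /\ (forall X, F X -> subset X U) /\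
      (forall V, L V -> (forall X, F X -> subset X V) -> subset U V).

(* Main.v *)
Require Import Defs.
From Stdlib Require Import List Arith Lia.
Import ListNotations.

Lemma snoc_nth {E} (tau : list E) e i :
  nth_error (tau ++ [e]) i =
  if Nat.ltb i (length tau) then nth_error tau i
  else if Nat.eqb i (length tau) then Some e else None.
Proof.
  destruct (Nat.ltb_spec i (length tau)).
  - now rewrite nth_error_app1.
  - rewrite nth_error_app2 by lia.
    destruct (Nat.eqb_spec i (length tau)).
    + subst. now rewrite Nat.sub_diag.
    + apply nth_error_None. simpl. lia.
Qed.

Lemma prefix_split {E} (tau : list E) s :
  prefix (Fin tau) s -> s = Fin tau \/ exists e, prefix (snoc tau e) s.
Proof.
  intros [Hl Hn]. unfold idx_lt in Hn; simpl in Hn.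
  destruct s as [l|f].
  - unfold len_le in Hl; simpl in Hl.
    destruct (Nat.eq_dec (length tau) (length l)) as [Heq|Hne].
    + left. f_equal. symmetry. apply nth_error_ext. intros n.
      destruct (Nat.ltb_spec n (length tau)).
      * exact (Hn n H).
      * rewrite !(proj2 (nth_error_None _ _)) by lia. reflexivity.
    + right. assert (Hlt : length tau < length l) by lia.
      destruct (nth_error l (length tau)) as [e|] eqn:He.
      2:{ apply nth_error_None in He. lia. }
      exists e. split.
      * unfold len_le; simpl. rewrite length_app. simpl. lia.
      * unfold idx_lt; simpl. rewrite length_app; simpl. intros i Hi.
        simpl. rewrite snoc_nth.
        destruct (Nat.ltb_spec i (length tau)); [apply Hn; auto|].
        destruct (Nat.eqb_spec i (length tau)); [subst; auto|lia].
  - right. exists (f (length tau)). split.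
    + exact I.
    + unfold idx_lt; simpl. rewrite length_app; simpl. intros i Hi.
      simpl. rewrite snoc_nth.
      destruct (Nat.ltb_spec i (length tau)); [apply Hn; auto|].
      destruct (Nat.eqb_spec i (length tau)); [subst; auto|lia].
Qed.

Theorem lemma6 (E : Type) (Smax : trace E -> Prop)
  (L : (trace E -> Prop) -> Prop)
  (HLsub : forall P, L P -> subset P Smax)
  (HLmax : L Smax) (HLempty : L (fun _ => False))
  (HLcl : complete_lattice L)
  (P : trace E -> Prop) (HP : L P) (tau : list E)
  (Htau_pf : pf Smax (Fin tau)) (Htau_nmax : ~ Smax (Fin tau))
  (Hext : forall e : E, pf Smax (snoc tau e) -> alpha Smax P (snoc tau e)) :
  alpha Smax P (Fin tau).
Proof.
  assert (Key : forall s', Smax s' -> prefix (Fin tau) s' -> P s').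
  { intros s' Hs Hp. destruct (prefix_split _ _ Hp) as [->|[e He]].
    - contradiction.
    - apply (proj2 (Hext e (ex_intro _ s' (conj Hs He)))); auto. }
  split; [|exact Key].
  destruct Htau_pf as [s [Hs Hp]]. exists s. split; auto.
Qed.
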